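(* In the big-action setting below, assume $n\ge2$. Then: (1) for every $i\in\{1,\dots,n-1\}$, the map $\ell_{i,i+1}:V\to\mathbb F_p$ is $\mathbb F_p$-linear; (2) for every $i\in\{1,\dots,n-1\}$ such that $\ell_{i,i+1}$ is not identically zero, putting $\mathcal L_{i,i+1}(X)=\prod_{y\in\ker\ell_{i,i+1}}(X-y)$, there exists $\lambda_i\in k\setminus\{0\}$ such that $\ell_{i,i+1}(y)=\lambda_i\mathcal L_{i,i+1}(y)$ for all $y\in V$, and $V$ is exactly the set of roots in $k$ of $\lambda_i^p\mathcal L_{i,i+1}^p-\lambda_i\mathcal L_{i,i+1}$.
   Context: Big-action setting. Let $k$ be an algebraically closed field of characteristic $p>0$, $C$ a connected nonsingular projective curve over $k$ of genus $g\ge 2$, and $G$ a finite $p$-subgroup of $\mathrm{Aut}_k(C)$ with $|G|/g>2p/(p-1)$ (a ''big action'' $(C,G)$). It is known that there is a point $\infty\in C$ such that $G$ equals its own first (wild) ramification group at $\infty$, that $\infty$ is the only ramification point of $C\to C/G\cong\mathbb P^1_k$, that the second lower ramification group $G_2$ of $G$ at $\infty$ is a nontrivial proper subgroup of $G$ equal to the commutator subgroup $D(G)$, and that $C/G_2\cong\mathbb P^1_k$. Assume $G_2\cong(\mathbb Z/p\mathbb Z)^n$ with $n\ge1$. Put $L=k(C)$ and write $L^{G_2}=k(X)$, where $X$ is a coordinate on $C/G_2$ with pole at the image of $\infty$; then $G/G_2$ acts on $k(X)$ by translations $X\mapsto X+y$, $y$ ranging over an $\mathbb F_p$-subspace $V\subset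 k$ of dimension $v$, giving an exact sequence $0\to G_2\to G\to V\to 0$, $\sigma\mapsto\sigma(X)-X$. Let $\wp(Z)=Z^p-Z$. A polynomial in $k[X]$ is called reduced if it is a $k$-linear combination of monomials $X^j$ with $p\nmid j$; every $f\in k[X]$ is congruent modulo $\wp(k[X])$ to a unique reduced polynomial. Let $A=(\wp(L)\cap k[X])/\wp(k[X])$, an $n$-dimensional $\mathbb F_p$-vector space, and for $\bar f\in A$ let $\deg\bar f=\min\{\deg(f+\wp(P)):P\in k[X]\}$. Fix an $\mathbb F_p$-basis $\bar f_1,\dots,\bar f_n$ of $A$ with $m_i:=\deg\bar f_i$ such that (a) $p\nmid m_i$, (b) $m_1\le\dots\le m_n$, (c) for all $(\lambda_1,\dots,\lambda_n)\in\mathbb F_p^n\setminus\{0\}$, $\deg(\sum_i\lambda_i\bar f_i)=\max_i\deg(\lambda_i\bar f_i)$. Let $f_i\in k[X]$ be the reduced representative of $\bar f_i$ (so $\deg f_i=m_i$); then $L=k(X,W_1,\dots,W_n)$ with $W_i^p-W_i=f_i(X)$. For every $y\in V$ and every $i$ one has $f_i(X+y)-f_i(X)\equiv\sum_{j=1}^{i-1}\ell_{j,i}(y)f_j(X)\bmod\wp(k[X])$ for uniquely determined maps $\ell_{j,i}:V\to\mathbb F_p$ (the matrix of $\bar f\mapsto\overline{f(X+y)}$ on $A$ in this basis is upper unitriangular with entries $\ell_{j,i}(y)$). *)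

(* Defs.v *)
From HB Require Import structures.
From mathcomp Require Import all_boot all_order all_algebra.
Set Implicit Arguments. Unset Strict Implicit. Unset Printing Implicit Defensive.
Import GRing.Theory.
Local Open Scope ring_scope.

Definition fp_emb (k : nzRingType) (p : nat) (a : 'F_p) : k := (nat_of_ord a)%:R.

Definition wp (k : nzRingType) (p : nat) (P : {poly k}) : {poly k} := P ^+ p - P.

Definition AS_equiv (k : nzRingType) (p : nat) (f g : {poly k}) : Prop :=
  exists P : {poly k}, f - g = wp p P.

Definition reduced (k : nzRingType) (p : nat) (f : {poly k}) : Prop :=
  forall j : nat, (p %| j)%N -> f`_j = 0.

(* class_size p f s : s = min { size (f + wp P) : P in k[X] }, i.e. the
   degree of the class of f modulo wp(k[X]) is s - 1
   (s = 0 meaning the class degree is -infinity, i.e. the zero class). *)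
Definition class_size (k : nzRingType) (p : nat) (f : {poly k}) (s : nat) : Prop :=
  (exists P : {poly k}, size (f + wp p P) = s) /\
  (forall P : {poly k}, (s <= size (f + wp p P)%R)%N).

(* Main.v *)
Require Import Defs.
From HB Require Import structures.
From mathcomp Require Import all_boot all_order all_algebra.
Import GRing.Theory.
Set Implicit Arguments. Unset Strict Implicit.
Local Open Scope ring_scope.

Section Fp.
Variables (k : closedFieldType) (p : nat).
Hypothesis pk : p \in [pchar k].

Lemma pprime : prime p. Proof. exact: pcharf_prime pk. Qed.

Lemma fp_emb_nat n : fp_emb k (n%:R : 'F_p) = n%:R.
Proof. by rewrite /fp_emb val_Fp_nat ?pprime // (GRing.natr_mod_pchar pk). Qed.

Lemma fp_val (a : 'F_p) : a = (nat_of_ord a)%:R.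
Proof. by rewrite natr_Zp. Qed.

Lemma fp_embD a b : fp_emb k (a + b : 'F_p) = fp_emb k a + fp_emb k b.
Proof. by rewrite (fp_val a) (fp_val b) -natrD !fp_emb_nat natrD. Qed.

Lemma fp_embM a b : fp_emb k (a * b : 'F_p) = fp_emb k a * fp_emb k b.
Proof. by rewrite (fp_val a) (fp_val b) -natrM !fp_emb_nat natrM. Qed.

Lemma fp_emb0 : fp_emb k (0 : 'F_p) = 0.
Proof. by have := fp_emb_nat 0. Qed.

Lemma fp_emb1 : fp_emb k (1 : 'F_p) = 1.
Proof. by have := fp_emb_nat 1. Qed.

Lemma fp_embN a : fp_emb k (- a : 'F_p) = - fp_emb k a.
Proof. by apply/eqP; rewrite -subr_eq0 opprK -fp_embD addNr fp_emb0. Qed.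

Lemma fp_embB a b : fp_emb k (a - b : 'F_p) = fp_emb k a - fp_emb k b.
Proof. by rewrite fp_embD fp_embN. Qed.

Lemma fp_emb_eq0 a : fp_emb k (a : 'F_p) = 0 -> a = 0.
Proof.
rewrite /fp_emb => /eqP; rewrite -(GRing.dvdn_pcharf pk) => H.
have lt : (nat_of_ord a < p)%N by move: (ltn_ord a); rewrite [X in (_ < X)%N]Fp_cast ?pprime.
apply/val_inj => /=; move: H lt; case: (nat_of_ord a) => // m.
by move=> /dvdn_leq H1 H2; by have := leq_ltn_trans (H1 isT) H2; rewrite ltnn.
Qed.

Lemma fp_emb_inj a b : fp_emb k (a : 'F_p) = fp_emb k b -> a = b.
Proof. by move=> H; apply/eqP; rewrite -subr_eq0; apply/eqP/fp_emb_eq0; rewrite fp_embB H subrr. Qed.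

Lemma fp_emb_frob a : fp_emb k (a : 'F_p) ^+ p = fp_emb k a.
Proof. by rewrite /fp_emb -(pFrobenius_autE pk) pFrobenius_aut_nat. Qed.

End Fp.
Section AS.
Variables (k : closedFieldType) (p : nat).
Hypothesis pk : p \in [pchar k].

Lemma pkP : p \in [pchar {poly k}]. Proof. by rewrite pchar_poly. Qed.

Lemma frobD (P Q : {poly k}) : (P + Q) ^+ p = P ^+ p + Q ^+ p.
Proof. by rewrite -!(pFrobenius_autE pkP) rmorphD. Qed.

Lemma frobN (P : {poly k}) : (- P) ^+ p = - P ^+ p.
Proof. by rewrite -!(pFrobenius_autE pkP) rmorphN. Qed.

Lemma p_gt0 : (0 < p)%N. Proof. exact: prime_gt0 (pcharf_prime pk). Qed.

Definition WS (g : {poly k}) := exists P, g = wp p P.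

Lemma WS0 : WS 0.
Proof. by exists 0; rewrite /wp expr0n eqn0Ngt p_gt0 subrr. Qed.

Lemma WSD g h : WS g -> WS h -> WS (g + h).
Proof.
by move=> [P ->] [Q ->]; exists (P + Q); rewrite /wp frobD opprD !addrA; congr (_ + _);
  rewrite -!addrA; congr (_ + _); rewrite addrC.
Qed.

Lemma WSN g : WS g -> WS (- g).
Proof. by move=> [P ->]; exists (- P); rewrite /wp frobN opprB opprK addrC. Qed.

Lemma WSB g h : WS g -> WS h -> WS (g - h).
Proof. by move=> a b; apply: WSD => //; apply: WSN. Qed.

Lemma WSZ c g : c ^+ p = c -> WS g -> WS (c *: g).
Proof. by move=> hc [P ->]; exists (c *: P); rewrite /wp exprZn hc scalerBr. Qed.

Lemma comp_polyXn (P q : {poly k}) n : (P ^+ n) \Po q = (P \Po q) ^+ n.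
Proof.
elim: n => [|n IH]; first by rewrite !expr0 comp_polyC.
by rewrite !exprS comp_polyM IH.
Qed.

Lemma WScomp g q : WS g -> WS (g \Po q).
Proof. by move=> [P ->]; exists (P \Po q); rewrite /wp comp_polyB comp_polyXn. Qed.

Lemma WS_sum (I : Type) (r : seq I) (P : pred I) (F : I -> {poly k}) :
  (forall i, P i -> WS (F i)) -> WS (\sum_(i <- r | P i) F i).
Proof. by move=> H; apply: (big_ind WS) => //; [exact: WS0 | exact: WSD]. Qed.

Lemma AS_WS f g : AS_equiv p f g <-> WS (f - g).
Proof. by split. Qed.

Lemma WS_class g s : WS g -> ~ class_size p g s.+1.
Proof.
move=> [Q ->] [_ H]; have := H (- Q).
rewrite /wp frobN opprK; suff -> : Q ^+ p - Q + (- Q ^+ p + Q) = 0 by rewrite size_poly0.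
by rewrite addrACA subrr addNr addr0.
Qed.

End AS.

Lemma comp_poly_sum (k : nzRingType) (I : Type) (r : seq I) (P : pred I) (F : I -> {poly k}) q :
  (\sum_(i <- r | P i) F i) \Po q = \sum_(i <- r | P i) (F i \Po q).
Proof. exact: (big_morph (fun x => x \Po q) (fun x y => comp_polyD x y q) (comp_poly0 q)). Qed.

Lemma id1 (G : zmodType) (a b c x y z : G) :
  (a - b - x) + (b - c - y) - (a - c - z) = z - x - y.
Proof.
rewrite !opprB addrC !addrA addrNK.
by rewrite (addrAC _ (- x) b) subrK (addrAC _ (- x) (- c)) addrK.
Qed.
Lemma id2 (G : zmodType) (a b c d : G) :
  (a - b - c) - (d - b) = a - d - c.
Proof. by rewrite opprB addrA (addrAC _ (- c) b) subrK addrAC. Qed.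

Lemma comp_T (k : comNzRingType) (F : {poly k}) (y z : k) :
  (F \Po ('X + y%:P)) \Po ('X + z%:P) = F \Po ('X + (y + z)%:P).
Proof. by rewrite -comp_polyA comp_polyD comp_polyX comp_polyC -addrA -polyCD (addrC z). Qed.

Section Part1.
Variables (k : closedFieldType) (p : nat).
Hypothesis pk : p \in [pchar k].
Variables (V : seq k) (n : nat) (f : nat -> {poly k}) (m : nat -> nat).
Hypothesis m_comb : forall lam : nat -> 'F_p,
      (exists2 i, (1 <= i <= n)%N & lam i != 0) ->
      class_size p (\sum_(1 <= i < n.+1) fp_emb k (lam i) *: f i)
                   (\max_(1 <= i < n.+1 | lam i != 0) m i).+1.
Hypothesis V0 : 0 \in V.
Hypothesis V_sub : forall (a : 'F_p) (y z : k), y \in V -> z \in V ->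
             fp_emb k a * y + z \in V.
Variable ell : nat -> nat -> k -> 'F_p.
Hypothesis ell_def : forall (y : k) (i : nat), y \in V -> (1 <= i <= n)%N ->
      AS_equiv p (f i \Po ('X + y%:P) - f i)
                 (\sum_(1 <= j < i) fp_emb k (ell j i y) *: f j).

Definition comb (c : nat -> 'F_p) i := \sum_(1 <= j < i) fp_emb k (c j) *: f j.

Definition SP i g := exists c, WS p (g - comb c i).

Lemma comb0 i : comb (fun _ => 0) i = 0.
Proof. by rewrite /comb big1 // => j _; rewrite fp_emb0 // scale0r. Qed.

Lemma combD c c' i : comb c i + comb c' i = comb (fun j => c j + c' j) i.
Proof. by rewrite /comb -big_split; apply: eq_bigr => j _; rewrite fp_embD // scalerDl. Qed.

Lemma combZ a c i : fp_emb k a *: comb c i = comb (fun j => a * c j) i.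
Proof. by rewrite /comb scaler_sumr; apply: eq_bigr => j _; rewrite fp_embM // scalerA. Qed.

Lemma combN c i : - comb c i = comb (fun j => - c j) i.
Proof. by rewrite /comb -sumrN; apply: eq_bigr => j _; rewrite fp_embN // scaleNr. Qed.

Lemma combB c c' i : comb c i - comb c' i = comb (fun j => c j - c' j) i.
Proof. by rewrite combN combD. Qed.

Lemma comb_mono c i j : (j <= i)%N ->
  comb c j = comb (fun l => if (l < j)%N then c l else 0) i.
Proof.
move=> ji; rewrite /comb (big_nat_widen _ _ _ _ _ ji) big_mkcondr /=.
by apply: eq_bigr => l _; case: ifP => //; rewrite fp_emb0 // scale0r.
Qed.

Lemma comb_succ c i : (1 <= i)%N -> comb c i.+1 = comb c i + fp_emb k (c i) *: f i.
Proof. by move=> h; rewrite /comb big_nat_recr. Qed.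

Lemma SP0 i : SP i 0.
Proof. by exists (fun _ => 0); rewrite comb0 subrr; apply: WS0. Qed.

Lemma SP_comb c i : SP i (comb c i).
Proof. by exists c; rewrite subrr; apply: WS0. Qed.

Lemma SP_AS i g h : SP i g -> WS p (h - g) -> SP i h.
Proof.
move=> [c Hc] H; exists c.
have -> : h - comb c i = (h - g) + (g - comb c i) by rewrite addrA subrK.
exact: WSD.
Qed.

Lemma SPD i g h : SP i g -> SP i h -> SP i (g + h).
Proof.
move=> [c Hc] [c' Hc']; exists (fun j => c j + c' j); rewrite -combD.
have -> : g + h - (comb c i + comb c' i) = (g - comb c i) + (h - comb c' i).
  by rewrite opprD addrACA.
exact: WSD.
Qed.

Lemma SPZ i (a : 'F_p) g : SP i g -> SP i (fp_emb k a *: g).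
Proof.
move=> [c Hc]; exists (fun j => a * c j); rewrite -combZ -scalerBr.
by apply: WSZ => //; apply: fp_emb_frob.
Qed.

Lemma SPN i g : SP i g -> SP i (- g).
Proof. by move=> H; have := SPZ (-1) H; rewrite fp_embN // fp_emb1 // scaleN1r. Qed.

Lemma SPB i g h : SP i g -> SP i h -> SP i (g - h).
Proof. by move=> a b; apply: SPD => //; apply: SPN. Qed.

Lemma SP_mono i j g : (j <= i)%N -> SP j g -> SP i g.
Proof. by move=> ji [c Hc]; exists (fun l => if (l < j)%N then c l else 0); rewrite -comb_mono. Qed.

Lemma SP_trans z j : z \in V -> (1 <= j <= n)%N -> SP j (f j \Po ('X + z%:P) - f j).
Proof. by move=> zV jn; exists (fun l => ell l j z); apply: (ell_def zV jn). Qed.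

Lemma SP_transcomb z c i : z \in V -> (i <= n)%N ->
  SP i (comb c i.+1 \Po ('X + z%:P) - comb c i.+1).
Proof.
move=> zV iN; rewrite /comb comp_poly_sum -sumrB big_seq.
apply: (big_ind (SP i)); [exact: SP0 | exact: SPD |] => j.
rewrite mem_index_iota => /andP [j1 ji].
rewrite comp_polyZ -scalerBr; apply: SPZ; apply: (SP_mono (j := j)) => //.
apply: SP_trans => //; rewrite j1 /=; exact: leq_trans iN.
Qed.

Lemma indep i (d : 'F_p) : (1 <= i <= n)%N -> SP i (fp_emb k d *: f i) -> d = 0.
Proof.
move=> /andP [i1 iN] [c Hc]; apply/eqP; apply/negPn/negP => dn0.
pose lam l : 'F_p := if l == i then d else if (l < i)%N then - c l else 0.
have E : \sum_(1 <= l < n.+1) fp_emb k (lam l) *: f l = fp_emb k d *: f i - comb c i.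
  rewrite (@big_cat_nat _ _ _ i) //; last by apply: leq_trans iN _.
  rewrite [X in _ + X = _](@big_cat_nat _ _ _ i.+1) // big_nat1 (@big1_seq _ _ _ _ (index_iota i.+1 n.+1)).
    rewrite /= addr0 addrC /lam eqxx; congr (_ + _); rewrite combN /comb big_seq [RHS]big_seq.
    apply: eq_bigr => l; rewrite mem_index_iota => /andP [_ li].
    by rewrite (ltn_eqF li) li.
  move=> l /andP [_]; rewrite mem_index_iota => /andP [il _].
  rewrite /lam (gtn_eqF il) ltnNge (ltnW il) /= fp_emb0 // scale0r //.
have := m_comb (lam := lam); rewrite E => H.
apply: (WS_class pk Hc); apply: H; exists i; first by rewrite i1.
by rewrite /lam eqxx.
Qed.

Lemma ell_add i y z : (1 <= i < n)%N -> y \in V -> z \in V -> y + z \in V ->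
  ell i i.+1 (y + z) = ell i i.+1 y + ell i i.+1 z.
Proof.
move=> /andP [i1 iN] yV zV yzV.
have iN' : (1 <= i.+1 <= n)%N by rewrite iN.
set F := f i.+1.
have HA : WS p (F \Po ('X + (y + z)%:P) - F - comb (fun j => ell j i.+1 (y + z)) i.+1) := ell_def yzV iN'.
have HB : WS p (F \Po ('X + y%:P) - F - comb (fun j => ell j i.+1 y) i.+1) := ell_def yV iN'.
have HC : WS p (F \Po ('X + z%:P) - F - comb (fun j => ell j i.+1 z) i.+1) := ell_def zV iN'.
have HBz := WScomp ('X + z%:P) HB; rewrite !comp_polyB comp_T in HBz.
have S1 := SP_transcomb (fun j => ell j i.+1 y) zV (ltnW iN).
have W := WSB pk (WSD pk HBz HC) HA; rewrite id1 in W.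
have SG : SP i (comb (fun j => ell j i.+1 (y + z)) i.+1 - comb (fun j => ell j i.+1 y) i.+1
               - comb (fun j => ell j i.+1 z) i.+1).
  by apply: (SP_AS S1); rewrite id2.
rewrite !combB comb_succ // in SG.
have := SPB SG (SP_comb (fun j => ell j i.+1 (y + z) - ell j i.+1 y - ell j i.+1 z) i).
rewrite addrAC subrr add0r => /indep.
rewrite i1 (ltnW iN) => /(_ isT) /eqP.
by rewrite subr_eq0 subr_eq => /eqP ->; rewrite addrC.
Qed.

Lemma addV y z : y \in V -> z \in V -> y + z \in V.
Proof. by move=> yV zV; have := V_sub 1 yV zV; rewrite fp_emb1 // mul1r. Qed.

Lemma scV (a : 'F_p) y : y \in V -> fp_emb k a * y \in V.
Proof. by move=> yV; have := V_sub a yV V0; rewrite addr0. Qed.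

Lemma ell_lin i : (1 <= i < n)%N ->
     forall (a b : 'F_p) (y z : k), y \in V -> z \in V ->
       ell i i.+1 (fp_emb k a * y + fp_emb k b * z)
         = a * ell i i.+1 y + b * ell i i.+1 z.
Proof.
move=> hi.
have ell0 : ell i i.+1 0 = 0.
  have := ell_add hi V0 V0 (addV V0 V0); rewrite addr0 => H.
  by apply: (@addrI _ (ell i i.+1 0)); rewrite addr0 -H.
have natV N y : y \in V -> N%:R * y \in V.
  by move=> yV; rewrite -(fp_emb_nat pk N); apply: scV.
have ellN N y : y \in V -> ell i i.+1 (N%:R * y) = N%:R * ell i i.+1 y.
  move=> yV; elim: N => [|N IH]; first by rewrite !mul0r.
  rewrite !mulrS !mulrDl !mul1r ell_add //; first by rewrite IH.
    exact: natV.
  by rewrite -[y in y + _]mul1r -mulrDl -mulrS; apply: natV.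
have ellS (a : 'F_p) y : y \in V -> ell i i.+1 (fp_emb k a * y) = a * ell i i.+1 y.
  by move=> yV; rewrite /fp_emb ellN // {2}(fp_val a).
move=> a b y z yV zV; rewrite ell_add //; first by rewrite !ellS.
  exact: scV.
  exact: scV.
by apply: addV; apply: scV.
Qed.

End Part1.

Section Part2.
Variables (k : closedFieldType) (p : nat).
Hypothesis pk : p \in [pchar k].
Variables (V : seq k).
Hypothesis V_uniq : uniq V.
Hypothesis V0 : 0 \in V.
Hypothesis V_sub : forall (a : 'F_p) (y z : k), y \in V -> z \in V ->
             fp_emb k a * y + z \in V.
Variable L : k -> 'F_p.
Hypothesis Llin : forall (a b : 'F_p) (y z : k), y \in V -> z \in V ->
       L (fp_emb k a * y + fp_emb k b * z) = a * L y + b * L z.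

Lemma scV2 (a : 'F_p) y : y \in V -> fp_emb k a * y \in V.
Proof. by move=> yV; have := V_sub a yV V0; rewrite addr0. Qed.

Lemma L_add y z : y \in V -> z \in V -> L (y + z) = L y + L z.
Proof. by move=> yV zV; have := Llin 1 1 yV zV; rewrite fp_emb1 // !mul1r. Qed.

Lemma L_sub y z : y \in V -> z \in V -> L (y - z) = L y - L z.
Proof.
by move=> yV zV; have := Llin 1 (-1) yV zV; rewrite fp_emb1 // fp_embN // fp_emb1 // !mul1r !mulN1r.
Qed.

Lemma subV y z : y \in V -> z \in V -> y - z \in V.
Proof. by move=> yV zV; have := V_sub (-1) zV yV; rewrite fp_embN // fp_emb1 // mulN1r addrC. Qed.

Lemma L0 : L 0 = 0.
Proof. by have := L_sub V0 V0; rewrite !subrr. Qed.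

Definition K := [seq y <- V | L y == 0].
Definition Lp : {poly k} := \prod_(y <- K) ('X - y%:P).

Lemma LpE : \prod_(y <- V | L y == 0) ('X - y%:P) = Lp.
Proof. by rewrite /Lp big_filter. Qed.

Lemma inK x : (x \in K) = (x \in V) && (L x == 0).
Proof. by rewrite mem_filter andbC. Qed.

Lemma rootLp x : root Lp x = (x \in K).
Proof. exact: root_prod_XsubC. Qed.

Lemma K_uniq : uniq K.
Proof. exact: filter_uniq. Qed.

Lemma K0 : 0 \in K.
Proof. by rewrite inK V0 L0 eqxx. Qed.

Lemma LpK y w : w \in K -> Lp.[y + w] = Lp.[y].
Proof.
move=> wK; rewrite /Lp !horner_prod.
have -> : \prod_(a <- K) ('X - a%:P).[y + w] = \prod_(b <- [seq a - w | a <- K]) ('X - b%:P).[y].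
  rewrite big_map; apply: eq_bigr => a _; rewrite !hornerXsubC.
  by rewrite opprB addrA.
apply: perm_big; apply: uniq_perm.
- by rewrite map_inj_uniq ?K_uniq // => a b /addIr.
- exact: K_uniq.
move: wK; rewrite inK => /andP [wV /eqP Lw] x; apply/mapP/idP.
  move=> [a]; rewrite inK => /andP [aV /eqP La] ->.
  by rewrite inK subV // L_sub // La Lw subrr eqxx.
rewrite inK => /andP [xV /eqP Lx]; exists (x + w); last by rewrite addrK.
have nwV : - w \in V by rewrite -sub0r subV.
have xwV : x + w \in V by rewrite -(opprK w) subV.
by rewrite inK xwV L_add // Lx Lw addr0 eqxx.
Qed.

Lemma Lp_monic : Lp \is monic.
Proof. exact: monic_prod_XsubC. Qed.

Lemma size_Lp : size Lp = (size K).+1.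
Proof. exact: size_prod_XsubC. Qed.

Lemma Lp_add x y : Lp.[x + y] = Lp.[x] + Lp.[y].
Proof.
pose A := Lp \Po ('X + y%:P).
pose Q := A - Lp - (Lp.[y])%:P.
have sA : size A = size Lp by rewrite size_comp_poly2 // size_XaddC.
have lA : lead_coef A = 1.
  by rewrite lead_coef_comp ?size_XaddC // lead_coefXaddC expr1n mulr1; apply/monicP/Lp_monic.
have sK : (0 < size K)%N by case: (K) K0.
have sQ : (size Q <= size K)%N.
  apply/leq_sizeP => j hj; rewrite /Q !coefB coefC.
  have -> : (j == 0%N) = false by apply/negbTE; rewrite -lt0n (leq_trans sK hj).
  rewrite subr0; case: (ltngtP j (size K)) => [|hj'|->].
  - by rewrite ltnNge hj.
  - by rewrite !nth_default ?subrr // ?sA size_Lp.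
  have e1 : A`_(size K) = lead_coef A by rewrite lead_coefE sA size_Lp.
  have e2 : Lp`_(size K) = lead_coef Lp by rewrite lead_coefE size_Lp.
  by rewrite e1 e2 lA (monicP Lp_monic) subrr.
have rQ : all (root Q) K.
  apply/allP => w wK; rewrite /root /Q /A !hornerE horner_comp !hornerE.
  by rewrite [w + y]addrC LpK // (eqP (etrans (rootLp w) wK)) subr0 subrr.
have Q0 : Q = 0.
  apply/eqP; apply/negP => /negP nQ.
  by have := max_poly_roots nQ rQ K_uniq; rewrite ltnNge sQ.
have := congr1 (fun P => P.[x]) Q0; rewrite /Q /A !hornerE horner_comp !hornerE.
by move/eqP; rewrite subr_eq0 subr_eq => /eqP ->; rewrite addrC.
Qed.

Lemma Lp0 : Lp.[0] = 0.
Proof. by apply/eqP; rewrite -/(root Lp 0) rootLp K0. Qed.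

Lemma Lp_fp (a : 'F_p) x : Lp.[fp_emb k a * x] = fp_emb k a * Lp.[x].
Proof.
rewrite /fp_emb; elim: (nat_of_ord a) => [|N IH]; first by rewrite !mul0r Lp0.
by rewrite !mulrS !mulrDl !mul1r Lp_add IH.
Qed.

Lemma fp_roots (t : k) : t ^+ p = t -> exists c : 'F_p, t = fp_emb k c.
Proof.
move=> tp; case: (boolP [exists c : 'F_p, t == fp_emb k c]).
  by move/existsP => [c /eqP ->]; exists c.
rewrite negb_exists => /forallP H; exfalso.
have pp := pcharf_prime pk.
pose P : {poly k} := 'X^p - 'X.
have sP : size P = p.+1.
  by rewrite /P size_polyDl size_polyXn // size_polyN size_polyX ltnS prime_gt1.
have nP : P != 0 by rewrite -size_poly_eq0 sP.
pose s := t :: [seq fp_emb k c | c <- enum 'F_p].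
have rs : all (root P) s.
  apply/allP => u; rewrite inE => /orP [/eqP ->|/mapP [c _ ->]];
    by rewrite /root /P !hornerE ?tp ?fp_emb_frob // subrr.
have us : uniq s.
  rewrite /= map_inj_uniq ?enum_uniq; last by move=> a b /fp_emb_inj; apply.
  by rewrite andbT; apply/mapP => [[c _ /eqP]]; rewrite (negbTE (H c)).
have := max_poly_roots nP rs us; rewrite sP /= size_map -cardE card_Fp //.
by rewrite ltnn.
Qed.

Lemma part2_main : (exists2 y, y \in V & L y != 0) ->
  exists lam : k,
    [/\ lam != 0,
        (forall y, y \in V -> fp_emb k (L y) = lam * Lp.[y])
      & (forall x : k, x \in V <-> root (lam ^+ p *: Lp ^+ p - lam *: Lp) x)].
Proof.
move=> [y0 y0V Ly0].
pose y1 := fp_emb k (L y0)^-1 * y0.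
have y1V : y1 \in V by apply: scV2.
have Ly1 : L y1 = 1.
  have := Llin (L y0)^-1 0 y0V V0; rewrite mulr0 addr0 mul0r addr0 => ->.
  by rewrite mulVf.
have Lpy1 : Lp.[y1] != 0.
  by rewrite -/(root Lp y1) rootLp inK y1V Ly1 oner_eq0.
have key y : y \in V -> Lp.[y] = fp_emb k (L y) * Lp.[y1].
  move=> yV; pose y' := y - fp_emb k (L y) * y1.
  have y'V : y' \in V by rewrite subV // scV2.
  have Ly' : L y' = 0.
    rewrite /y' L_sub // ?scV2 //.
    have := Llin (L y) 0 y1V V0; rewrite mulr0 addr0 mul0r addr0 => ->.
    by rewrite Ly1 mulr1 subrr.
  have Lpy' : Lp.[y'] = 0 by apply/eqP; rewrite -/(root Lp y') rootLp inK y'V Ly' eqxx.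
  have E : Lp.[y] = Lp.[y' + fp_emb k (L y) * y1] by rewrite /y' subrK.
  by rewrite E Lp_add Lp_fp Lpy' add0r.
exists (Lp.[y1])^-1; split.
- by rewrite invr_eq0.
- by move=> y yV; rewrite (key y yV) mulrCA mulVf // mulr1.
have ev x : root ((Lp.[y1])^-1 ^+ p *: Lp ^+ p - (Lp.[y1])^-1 *: Lp) x
   = (((Lp.[y1])^-1 * Lp.[x]) ^+ p - (Lp.[y1])^-1 * Lp.[x] == 0).
  by rewrite /root !hornerE exprMn.
move=> x; rewrite ev; split.
  move=> xV; rewrite (key x xV) mulrCA mulVf // mulr1 fp_emb_frob // subrr //.
rewrite subr_eq0 => /eqP /fp_roots [c Hc].
pose x' := x + fp_emb k (- c) * y1.
have Lx' : Lp.[x'] = 0.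
  have : (Lp.[y1])^-1 * Lp.[x'] = 0.
    by rewrite /x' Lp_add Lp_fp mulrDr Hc mulrCA mulVf // mulr1 fp_embN // addrN.
  by move/eqP; rewrite mulf_eq0 invr_eq0 (negbTE Lpy1) /= => /eqP.
have x'V : x' \in V.
  by have := rootLp x'; rewrite /root Lx' eqxx inK => /esym /andP [].
have := V_sub c y1V x'V.
by rewrite /x' fp_embN // mulNr addrCA addrN addr0.
Qed.

End Part2.

Unset Implicit Arguments. Set Strict Implicit.

Theorem proposition2p9
  (k : closedFieldType) (p : nat) (pchar_k : p \in [pchar k])
  (V : seq k) (V_uniq : uniq V) (V0 : 0 \in V)
  (V_sub : forall (a : 'F_p) (y z : k), y \in V -> z \in V ->
             fp_emb k a * y + z \in V)
  (n : nat) (n_ge2 : (2 <= n)%N)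
  (f : nat -> {poly k}) (m : nat -> nat)
  (f_red : forall i, (1 <= i <= n)%N -> reduced p (f i))
  (f_size : forall i, (1 <= i <= n)%N -> size (f i) = (m i).+1)
  (f_deg : forall i, (1 <= i <= n)%N -> class_size p (f i) (m i).+1)
  (m_ndiv : forall i, (1 <= i <= n)%N -> ~~ (p %| m i)%N)
  (m_mono : forall i j, (1 <= i)%N -> (i <= j)%N -> (j <= n)%N -> (m i <= m j)%N)
  (m_comb : forall lam : nat -> 'F_p,
      (exists2 i, (1 <= i <= n)%N & lam i != 0) ->
      class_size p (\sum_(1 <= i < n.+1) fp_emb k (lam i) *: f i)
                   (\max_(1 <= i < n.+1 | lam i != 0) m i).+1)
  (ell : nat -> nat -> k -> 'F_p)
  (ell_def : forall (y : k) (i : nat), y \in V -> (1 <= i <= n)%N ->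
      AS_equiv p (f i \Po ('X + y%:P) - f i)
                 (\sum_(1 <= j < i) fp_emb k (ell j i y) *: f j)) :
  (forall i, (1 <= i < n)%N ->
     forall (a b : 'F_p) (y z : k), y \in V -> z \in V ->
       ell i i.+1 (fp_emb k a * y + fp_emb k b * z)
         = a * ell i i.+1 y + b * ell i i.+1 z)
  /\
  (forall i, (1 <= i < n)%N ->
     (exists2 y, y \in V & ell i i.+1 y != 0) ->
     let Lp : {poly k} := \prod_(y <- V | ell i i.+1 y == 0) ('X - y%:P) in
     exists lam : k,
       [/\ lam != 0,
           (forall y, y \in V -> fp_emb k (ell i i.+1 y) = lam * Lp.[y])
         & (forall x : k, x \in V <-> root (lam ^+ p *: Lp ^+ p - lam *: Lp) x)]).
Proof.
have P1 := fun i hi => ell_lin pchar_k m_comb V0 V_sub ell_def (i := i) hi.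
split; first exact: P1.
move=> i hi ex Lq; rewrite /Lq (@LpE k p V (ell i i.+1)).
by have := part2_main pchar_k V_uniq V0 V_sub (P1 i hi) ex.
Qed.
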